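(* Let $k\ge 3$ and let $\mathcal G$ be an exactly $2$-intersecting family of $k$ compact convex sets in the plane. Then the union complexity of $\mathcal G$ is at least $\binom k2$.
   Context: A finite family of sets is exactly $2$-intersecting if every two of its members intersect but no three of its members have a common point. The union complexity of a finite family $\mathcal G$ of planar regions is the number of vertices (points belonging to the boundaries of two distinct members of $\mathcal G$) that lie on the boundary of $\bigcup_{G\in\mathcal G}G$. *)

(* Defs.v *)
From Stdlib Require Import Reals List Arith.
Open Scope R_scope.

Definition point := (R * R)%type.
Definition region := point -> Prop.

Definition dist2 (p q : point) : R :=
  (fst p - fst q)^2 + (snd p - snd q)^2.

Definition in_ball (p : point) (e : R) (q : point) : Prop := dist2 p q < e^2.

Definition convex_set (S : region) : Prop :=
  forall x y : point, S x -> S y -> forall t : R, 0 <= t <= 1 ->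
    S ((1 - t) * fst x + t * fst y, (1 - t) * snd x + t * snd y).

Definition closed_set (S : region) : Prop :=
  forall p : point, ~ S p -> exists e, 0 < e /\ forall q, in_ball p e q -> ~ S q.

Definition bounded (S : region) : Prop :=
  exists M : R, forall p : point, S p -> dist2 p (0, 0) <= M.

Definition compact_set (S : region) : Prop := closed_set S /\ bounded S.

Definition boundary (S : region) (p : point) : Prop :=
  forall e, 0 < e ->
    (exists q, in_ball p e q /\ S q) /\ (exists q, in_ball p e q /\ ~ S q).

Definition exactly_2_intersecting (k : nat) (G : nat -> region) : Prop :=
  (forall i j, (i < k)%nat -> (j < k)%nat -> i <> j ->
     exists p, G i p /\ G j p) /\
  (forall i j l, (i < k)%nat -> (j < k)%nat -> (l < k)%nat ->
     i <> j -> j <> l -> i <> l -> ~ (exists p, G i p /\ G j p /\ G l p)).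

Definition family_union (k : nat) (G : nat -> region) : region :=
  fun p => exists i, (i < k)%nat /\ G i p.

Definition vertex (k : nat) (G : nat -> region) (p : point) : Prop :=
  exists i j, (i < k)%nat /\ (j < k)%nat /\ i <> j /\
    boundary (G i) p /\ boundary (G j) p.

Definition union_vertex (k : nat) (G : nat -> region) (p : point) : Prop :=
  vertex k G p /\ boundary (family_union k G) p.

(* "union complexity >= n": at least n distinct such points
   (this also covers the case of infinitely many) *)
Definition union_complexity_ge (k : nat) (G : nat -> region) (n : nat) : Prop :=
  exists l : list point, length l = n /\ NoDup l /\
    forall p, In p l -> union_vertex k G p.

Definition binom2 (k : nat) : nat := Nat.div (k * (k - 1)) 2.

(* Main.v *)
Require Import Defs.
From Stdlib Require Import Reals List Arith.
From Stdlib Require Import Reals List Arith Lra Lia Psatz Classical ClassicalEpsilon.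
Require Import Defs.
Open Scope R_scope.

Definition Q (c x y : point) (u v : R) : point :=
  (fst c + u*(fst x - fst c) + v*(fst y - fst c),
   snd c + u*(snd x - snd c) + v*(snd y - snd c)).

Lemma conv_Q (S : region) c x y u1 v1 u2 v2 t u v :
  convex_set S -> S (Q c x y u1 v1) -> S (Q c x y u2 v2) -> 0 <= t <= 1 ->
  u = (1-t)*u1+t*u2 -> v = (1-t)*v1+t*v2 -> S (Q c x y u v).
Proof.
  intros HS H1 H2 Ht -> ->.
  specialize (HS _ _ H1 H2 t Ht).
  replace (Q c x y ((1 - t) * u1 + t * u2) ((1 - t) * v1 + t * v2)) with
    ((1 - t) * fst (Q c x y u1 v1) + t * fst (Q c x y u2 v2),
     (1 - t) * snd (Q c x y u1 v1) + t * snd (Q c x y u2 v2)); [exact HS|].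
  unfold Q; simpl; f_equal; ring.
Qed.

Lemma closed_line (S : region) c x y a1 b1 a2 b2 r0 :
  closed_set S ->
  (forall d, 0 < d -> exists r, Rabs (r - r0) < d /\ S (Q c x y (a1 + r*b1) (a2 + r*b2))) ->
  S (Q c x y (a1 + r0*b1) (a2 + r0*b2)).
Proof.
  intros HS Hn. apply NNPP; intro HN.
  destruct (HS _ HN) as [e [He Hb]].
  set (D1 := b1*(fst x - fst c) + b2*(fst y - fst c)).
  set (D2 := b1*(snd x - snd c) + b2*(snd y - snd c)).
  set (D := D1^2 + D2^2).
  assert (HD : 0 <= D) by (unfold D; nra).
  set (d := e / (D+1)).
  assert (Hd : 0 < d) by (unfold d; apply Rdiv_lt_0_compat; lra).
  assert (Hde : d * (D+1) = e) by (unfold d; field; lra).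
  destruct (Hn d Hd) as [r [Hr HSr]].
  refine (Hb _ _ HSr). unfold in_ball, dist2, Q; simpl.
  set (h := r0 - r).
  match goal with |- ?L < _ => replace L with (h^2*D) by (unfold h, D, D1, D2; ring) end.
  assert (Hh : h^2 < d^2).
  { assert (Rabs h < d) by (unfold h; rewrite Rabs_minus_sym; exact Hr).
    rewrite <- pow2_abs. pose proof (Rabs_pos h). nra. }
  rewrite <- Hde.
  assert (h^2 * D <= d^2 * D) by nra.
  assert (d^2 * D < d^2 * (D+1)^2) by nra.
  nra.
Qed.

Lemma Qeq (S : region) c x y u v u' v' : u = u' -> v = v' -> S (Q c x y u v) -> S (Q c x y u' v').
Proof. intros -> ->; auto. Qed.

Lemma Q00 c x y : Q c x y 0 0 = c.
Proof. destruct c; unfold Q; simpl; f_equal; ring. Qed.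
Lemma Q10 c x y : Q c x y 1 0 = x.
Proof. destruct x; unfold Q; simpl; f_equal; ring. Qed.
Lemma Q01 c x y : Q c x y 0 1 = y.
Proof. destruct y; unfold Q; simpl; f_equal; ring. Qed.

Lemma radial (S : region) c x y u v l :
  convex_set S -> S c -> S (Q c x y u v) -> 0 <= l <= 1 -> S (Q c x y (l*u) (l*v)).
Proof.
  intros HS Hc H Hl. rewrite <- (Q00 c x y) in Hc.
  apply (conv_Q S c x y 0 0 u v l); auto; ring.
Qed.

Lemma Rdiv_le_0_compat a b : 0 <= a -> 0 < b -> 0 <= a / b.
Proof. intros; unfold Rdiv; apply Rmult_le_pos; [|left; apply Rinv_0_lt_compat]; auto. Qed.

Definition P c x y t s := Q c x y (t*(1-s)) (t*s).

Lemma cluster_near (un : nat -> R) l d N : ValAdh un l -> 0 < d ->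
  exists p, (N <= p)%nat /\ Rabs (un p - l) < d.
Proof.
  intros H Hd. destruct (H (disc l (mkposreal d Hd)) N) as [p [Hp Hv]].
  - exists (mkposreal d Hd). intros z Hz; exact Hz.
  - exists p; split; auto.
Qed.

Lemma max_lemma (A B C : region) c x y :
  convex_set A -> closed_set A -> convex_set B -> closed_set B -> convex_set C ->
  A c -> B c -> A x -> C x -> B y -> C y ->
  (forall p, ~ (A p /\ B p /\ C p)) ->
  exists u0 v0, 0 <= u0 /\ 0 <= v0 /\ u0 + v0 < 1 /\
    A (Q c x y u0 v0) /\ B (Q c x y u0 v0) /\
    forall u v, 0 <= u -> 0 <= v -> u + v <= 1 ->
      A (Q c x y u v) -> B (Q c x y u v) -> u + v <= u0 + v0.
Proof.
  intros cA clA cB clB cC Ac Bc Ax Cx By Cy Htr.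
  set (E := fun t => 0 <= t <= 1 /\ exists s, 0 <= s <= 1 /\
             A (P c x y t s) /\ B (P c x y t s)).
  assert (HPc : forall s, P c x y 0 s = c).
  { intro s. unfold P. rewrite <- (Q00 c x y) at 2. f_equal; ring. }
  destruct (completeness E) as [m [Hub Hlub]].
  { exists 1. intros t [Ht _]; lra. }
  { exists 0. split; [lra|]. exists 0. rewrite HPc. repeat split; auto; lra. }
  assert (Hm0 : 0 <= m).
  { apply Hub. split; [lra|]. exists 0. rewrite HPc. repeat split; auto; lra. }
  assert (Hm1 : m <= 1).
  { apply Hlub. intros t [Ht _]; lra. }
  assert (Hex : forall n : nat, exists ts : R * R,
     0 <= fst ts <= 1 /\ 0 <= snd ts <= 1 /\ A (P c x y (fst ts) (snd ts)) /\
     B (P c x y (fst ts) (snd ts)) /\ m - / (INR n + 1) < fst ts).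
  { intro n. apply NNPP; intro HN.
    assert (Hpos : 0 < / (INR n + 1)).
    { apply Rinv_0_lt_compat. pose proof (pos_INR n). lra. }
    assert (m <= m - / (INR n + 1)); [|lra].
    apply Hlub. intros t [Ht [s [Hs [HA HB]]]].
    destruct (Rle_or_lt t (m - / (INR n + 1))) as [?|Hlt]; auto.
    exfalso; apply HN; exists (t, s); simpl; auto. }
  pose (f := fun n => proj1_sig (constructive_indefinite_description _ (Hex n))).
  assert (Hf : forall n, 0 <= fst (f n) <= 1 /\ 0 <= snd (f n) <= 1 /\
     A (P c x y (fst (f n)) (snd (f n))) /\ B (P c x y (fst (f n)) (snd (f n))) /\
     m - / (INR n + 1) < fst (f n)).
  { intro n. unfold f. destruct (constructive_indefinite_description _ (Hex n)); simpl; auto. }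
  destruct (Bolzano_Weierstrass (fun n => snd (f n)) (fun z => 0 <= z <= 1) (compact_P3 0 1))
    as [sg Hsg].
  { intro n. apply Hf. }
  assert (Hsg01 : 0 <= sg <= 1).
  { split.
    - apply Rnot_lt_le; intro Hlt.
      destruct (cluster_near _ _ (- sg) O Hsg) as [p [_ Hp]]; [lra|].
      destruct (Hf p) as [_ [Hs _]].
      apply Rabs_def2 in Hp. lra.
    - apply Rnot_lt_le; intro Hlt.
      destruct (cluster_near _ _ (sg - 1) O Hsg) as [p [_ Hp]]; [lra|].
      destruct (Hf p) as [_ [Hs _]].
      apply Rabs_def2 in Hp. lra. }
  assert (Hc1 : forall t, 0 <= t < m -> A (P c x y t sg) /\ B (P c x y t sg)).
  { intros t Ht.
    destruct (archimed_cor1 (m - t)) as [N [HN HN0]]; [lra|].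
    assert (Key : forall d, 0 < d -> exists r, Rabs (r - sg) < d /\
        A (P c x y t r) /\ B (P c x y t r)).
    { intros d Hd. destruct (cluster_near _ _ d N Hsg Hd) as [p [Hp Hd']].
      exists (snd (f p)). split; auto.
      destruct (Hf p) as [Ht1 [Hs1 [HA [HB Hlt]]]].
      assert (HINR : INR N <= INR p) by (apply le_INR; auto).
      assert (HN1 : 0 < INR N) by (apply lt_0_INR; auto).
      assert (/ (INR p + 1) < / INR N).
      { apply Rinv_lt_contravar; nra. }
      set (tp := fst (f p)) in *. set (sp := snd (f p)) in *.
      assert (Htp : t < tp) by lra.
      assert (Hl : 0 <= t / tp <= 1).
      { split. apply Rdiv_le_0_compat; lra.
        apply (Rmult_le_reg_r tp); [lra|]. unfold Rdiv; rewrite Rmult_assoc, Rinv_l; lra. }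
      unfold P in *. split.
      - apply (Qeq _ c x y (t/tp * (tp * (1 - sp))) (t/tp * (tp * sp))); try (field; lra).
        apply radial; auto.
      - apply (Qeq _ c x y (t/tp * (tp * (1 - sp))) (t/tp * (tp * sp))); try (field; lra).
        apply radial; auto. }
    split.
    - replace (P c x y t sg) with (Q c x y (t + sg * (-t)) (0 + sg * t))
        by (unfold P; f_equal; ring).
      apply closed_line; auto. intros d Hd. destruct (Key d Hd) as [r [Hr [HA _]]].
      exists r; split; auto. revert HA; unfold P; apply Qeq; ring.
    - replace (P c x y t sg) with (Q c x y (t + sg * (-t)) (0 + sg * t))
        by (unfold P; f_equal; ring).
      apply closed_line; auto. intros d Hd. destruct (Key d Hd) as [r [Hr [_ HB]]].
      exists r; split; auto. revert HB; unfold P; apply Qeq; ring. }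
  assert (Hc2 : A (P c x y m sg) /\ B (P c x y m sg)).
  { destruct (Req_dec m 0) as [Hm | Hm].
    - rewrite Hm, HPc; auto.
    - assert (Key : forall d, 0 < d -> exists r, Rabs (r - m) < d /\
          A (P c x y r sg) /\ B (P c x y r sg)).
      { intros d Hd. exists (m - Rmin d m / 2).
        assert (0 < Rmin d m) by (apply Rmin_glb_lt; lra).
        assert (Rmin d m <= d) by apply Rmin_l.
        assert (Rmin d m <= m) by apply Rmin_r.
        split. rewrite Rabs_left; lra.
        apply Hc1; lra. }
      split.
      + replace (P c x y m sg) with (Q c x y (0 + m * (1 - sg)) (0 + m * sg))
          by (unfold P; f_equal; ring).
        apply closed_line; auto. intros d Hd. destruct (Key d Hd) as [r [Hr [HA _]]].
        exists r; split; auto. revert HA; unfold P; apply Qeq; ring.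
      + replace (P c x y m sg) with (Q c x y (0 + m * (1 - sg)) (0 + m * sg))
          by (unfold P; f_equal; ring).
        apply closed_line; auto. intros d Hd. destruct (Key d Hd) as [r [Hr [_ HB]]].
        exists r; split; auto. revert HB; unfold P; apply Qeq; ring. }
  assert (Hm1' : m < 1).
  { destruct (Rle_lt_or_eq_dec _ _ Hm1) as [?|Heq]; auto. exfalso.
    destruct Hc2 as [HA HB]. apply (Htr (P c x y m sg)). repeat split; auto.
    rewrite Heq. unfold P.
    rewrite <- (Q10 c x y) in Cx. rewrite <- (Q01 c x y) in Cy.
    apply (conv_Q C c x y 1 0 0 1 sg); auto; ring. }
  exists (m * (1 - sg)), (m * sg).
  split; [nra|]. split; [nra|]. split; [nra|].
  split; [apply Hc2|]. split; [apply Hc2|].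
  intros u v Hu Hv Huv HA HB.
  replace (m * (1 - sg) + m * sg) with m by ring.
  destruct (Req_dec (u + v) 0) as [H0|H0]; [lra|].
  apply Hub. split; [lra|]. exists (v / (u + v)).
  assert (Hvv : 0 <= v / (u+v) <= 1).
  { split. apply Rdiv_le_0_compat; lra.
    apply (Rmult_le_reg_r (u+v)); [lra|]. unfold Rdiv; rewrite Rmult_assoc, Rinv_l; lra. }
  split; auto. unfold P. split; revert HA HB; [intros HA _|intros _ HB];
    [revert HA|revert HB]; apply Qeq; field; lra.
Qed.

Lemma sq_bound a b X Y : a^2 <= 1 -> b^2 <= 1 -> (a*X + b*Y)^2 <= 2*(X^2+Y^2).
Proof.
  intros Ha Hb.
  assert ((a*X+b*Y)^2 <= 2*(a^2*X^2 + b^2*Y^2)).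
  { assert (0 <= (a*X - b*Y)^2) by apply pow2_ge_0.
    replace (2*(a^2*X^2 + b^2*Y^2)) with ((a*X+b*Y)^2 + (a*X - b*Y)^2) by ring. lra. }
  assert (a^2*X^2 <= X^2).
  { pose proof (pow2_ge_0 X). replace (X^2) with (1*X^2) at 2 by ring.
    apply Rmult_le_compat_r; auto. }
  assert (b^2*Y^2 <= Y^2).
  { pose proof (pow2_ge_0 Y). replace (Y^2) with (1*Y^2) at 2 by ring.
    apply Rmult_le_compat_r; auto. }
  lra.
Qed.

Lemma core (A B C : region) c x y :
  convex_set A -> closed_set A -> convex_set B -> closed_set B -> convex_set C ->
  A c -> B c -> A x -> C x -> B y -> C y ->
  (forall p, ~ (A p /\ B p /\ C p)) ->
  exists w, A w /\ B w /\ forall e, 0 < e -> exists q, in_ball w e q /\ ~ A q /\ ~ B q.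
Proof.
  intros cA clA cB clB cC Ac Bc Ax Cx By Cy Htr.
  destruct (max_lemma A B C c x y) as [u0 [v0 [Hu0 [Hv0 [Hm [HAw [HBw Hmax]]]]]]]; auto.
  exists (Q c x y u0 v0). split; auto. split; auto.
  intros e He. apply NNPP; intro HN.
  assert (Hcov : forall q, in_ball (Q c x y u0 v0) e q -> A q \/ B q).
  { intros q Hq. apply NNPP; intro H'. apply HN. exists q. tauto. }
  set (X1 := fst x - fst c). set (Y1 := fst y - fst c).
  set (X2 := snd x - snd c). set (Y2 := snd y - snd c).
  set (D := 2*(X1^2+Y1^2) + 2*(X2^2+Y2^2)).
  assert (HD : 0 <= D) by (unfold D; nra).
  set (tau := Rmin (1/2) (e/(D+1))).
  assert (Htau0 : 0 < tau).
  { unfold tau; apply Rmin_glb_lt; [lra|]. apply Rdiv_lt_0_compat; lra. }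
  assert (Htau1 : tau <= 1/2) by apply Rmin_l.
  assert (Htaue : tau * (D+1) <= e).
  { assert (tau <= e/(D+1)) by apply Rmin_r.
    apply (Rmult_le_compat_r (D+1)) in H; [|lra].
    replace (e / (D+1) * (D+1)) with e in H by (field; lra). exact H. }
  set (a1 := (1-tau)*u0 + tau). set (b1 := -tau).
  set (a2 := (1-tau)*v0). set (b2 := tau).
  set (Rl := fun l => Q c x y (a1 + l*b1) (a2 + l*b2)).
  assert (Hball : forall l, 0 <= l <= 1 -> in_ball (Q c x y u0 v0) e (Rl l)).
  { intros l Hl. unfold in_ball, dist2, Rl, Q; simpl. fold X1 Y1 X2 Y2.
    set (a := 1 - l - u0). set (b := l - v0).
    match goal with |- ?L < _ =>
      replace L with (tau^2 * ((a*X1 + b*Y1)^2 + (a*X2+b*Y2)^2))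
      by (unfold a, b, a1, b1, a2, b2, X1, X2, Y1, Y2; ring) end.
    assert (Ha : a^2 <= 1) by (unfold a; nra).
    assert (Hb : b^2 <= 1) by (unfold b; nra).
    pose proof (sq_bound a b X1 Y1 Ha Hb).
    pose proof (sq_bound a b X2 Y2 Ha Hb).
    assert (tau^2 * ((a*X1 + b*Y1)^2 + (a*X2+b*Y2)^2) <= tau^2 * D).
    { apply Rmult_le_compat_l; [nra|]. unfold D; lra. }
    assert (tau^2 * D < (tau*(D+1))^2).
    { replace ((tau*(D+1))^2) with (tau^2 * ((D+1)^2)) by ring.
      apply Rmult_lt_compat_l; [apply pow_lt; lra| nra]. }
    assert ((tau*(D+1))^2 <= e^2).
    { apply pow_incr; split; [apply Rmult_le_pos; lra | exact Htaue]. }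
    lra. }
  assert (Hnot : forall l, 0 <= l <= 1 -> ~ (A (Rl l) /\ B (Rl l))).
  { intros l Hl [HA HB].
    assert (Hle := Hmax (a1 + l*b1) (a2 + l*b2)).
    unfold a1, b1, a2, b2 in Hle.
    assert ((1 - tau) * u0 + tau + l * - tau + ((1 - tau) * v0 + l * tau) <= u0 + v0).
    { apply Hle; auto; nra. }
    nra. }
  assert (HA0 : A (Rl 0)).
  { unfold Rl. rewrite <- (Q10 c x y) in Ax.
    apply (conv_Q A c x y u0 v0 1 0 tau); auto; try lra; unfold a1, b1, a2, b2; ring. }
  assert (HB1 : B (Rl 1)).
  { unfold Rl. rewrite <- (Q01 c x y) in By.
    apply (conv_Q B c x y u0 v0 0 1 tau); auto; try lra; unfold a1, b1, a2, b2; ring. }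
  set (L := fun l => 0 <= l <= 1 /\ A (Rl l)).
  destruct (completeness L) as [ls [Hub Hlub]].
  { exists 1. intros l [Hl _]; lra. }
  { exists 0. split; auto; lra. }
  assert (Hls0 : 0 <= ls) by (apply Hub; split; auto; lra).
  assert (Hls1 : ls <= 1) by (apply Hlub; intros l [Hl _]; lra).
  assert (HAls : A (Rl ls)).
  { unfold Rl. apply closed_line; auto. intros d Hd.
    apply NNPP; intro HN'.
    assert (ls <= ls - d); [|lra].
    apply Hlub. intros l [Hl HAl].
    destruct (Rle_or_lt l (ls - d)) as [?|Hlt]; auto. exfalso. apply HN'.
    exists l. split; auto. assert (l <= ls) by (apply Hub; split; auto).
    rewrite Rabs_left1; lra. }
  assert (Hls1' : ls < 1).
  { destruct (Rle_lt_or_eq_dec _ _ Hls1) as [?|Heq]; auto. exfalso.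
    apply (Hnot 1); [lra|]. rewrite <- Heq at 1. auto. }
  assert (HBls : B (Rl ls)).
  { unfold Rl. apply closed_line; auto. intros d Hd.
    set (l := ls + Rmin d (1 - ls) / 2).
    assert (0 < Rmin d (1 - ls)) by (apply Rmin_glb_lt; lra).
    assert (Rmin d (1-ls) <= d) by apply Rmin_l.
    assert (Rmin d (1-ls) <= 1 - ls) by apply Rmin_r.
    exists l. split. unfold l; rewrite Rabs_right; lra.
    assert (Hl : 0 <= l <= 1) by (unfold l; lra).
    destruct (Hcov _ (Hball l Hl)) as [HAl|HBl]; auto.
    exfalso. assert (l <= ls) by (apply Hub; split; auto). unfold l in *; lra. }
  apply (Hnot ls); auto; lra.
Qed.

Fixpoint pairs (n : nat) : list (nat * nat) :=
  match n with
  | O => nil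
  | S n' => pairs n' ++ map (fun i => (i, n')) (seq 0 n')
  end.

Lemma pairs_len n : length (pairs n) = binom2 n.
Proof.
  induction n as [|n IH]; [reflexivity|].
  simpl. rewrite length_app, length_map, length_seq, IH.
  unfold binom2.
  replace (S n * (S n - 1))%nat with (n * (n - 1) + n * 2)%nat.
  - rewrite Nat.div_add; lia.
  - destruct n; simpl; [reflexivity|]. rewrite Nat.sub_0_r. nia.
Qed.

Lemma pairs_in n i j : In (i, j) (pairs n) <-> (i < j < n)%nat.
Proof.
  induction n as [|n IH]; simpl; [split; [tauto|lia]|].
  rewrite in_app_iff, IH, in_map_iff. split.
  - intros [H|[i' [He Hi]]]; [lia|]. injection He; intros; subst.
    apply in_seq in Hi; lia.
  - intros H. destruct (Nat.eq_dec j n) as [->|Hn]; [right|left; lia].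
    exists i; split; auto. apply in_seq; lia.
Qed.

Lemma pairs_nodup n : NoDup (pairs n).
Proof.
  induction n as [|n IH]; simpl; [constructor|].
  apply NoDup_app; auto.
  - apply NoDup_map_NoDup_ForallPairs; [|apply seq_NoDup].
    intros a b _ _ H; injection H; auto.
  - intros [a b] H1 H2. apply pairs_in in H1. apply in_map_iff in H2.
    destruct H2 as [z [Hz _]]. injection Hz; intros; subst; lia.
Qed.

Lemma in_ball_mono w r r' q : 0 < r' -> r' <= r -> in_ball w r' q -> in_ball w r q.
Proof.
  unfold in_ball; intros H1 H2 H3.
  assert (r'^2 <= r^2) by (apply pow_incr; lra). lra.
Qed.

Lemma in_ball_self w e : 0 < e -> in_ball w e w.
Proof. unfold in_ball, dist2; intros; replace ((fst w - fst w)^2 + (snd w - snd w)^2) with 0 by ring.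
  apply pow_lt; auto. Qed.

Lemma pair_lemma (k : nat) (G : nat -> region) :
  (3 <= k)%nat ->
  (forall i, (i < k)%nat -> convex_set (G i) /\ compact_set (G i)) ->
  exactly_2_intersecting k G ->
  forall i j, (i < k)%nat -> (j < k)%nat -> i <> j ->
  exists p, G i p /\ G j p /\ union_vertex k G p.
Proof.
  intros Hk Hcv [H2 H3] i j Hi Hj Hij.
  assert (Hl : exists l, (l < k)%nat /\ l <> i /\ l <> j).
  { destruct (Nat.eq_dec i 0); destruct (Nat.eq_dec j 0);
    destruct (Nat.eq_dec i 1); destruct (Nat.eq_dec j 1); subst;
    first [exists 0%nat; lia | exists 1%nat; lia | exists 2%nat; lia]. }
  destruct Hl as [l [Hlk [Hli Hlj]]].
  destruct (H2 i j Hi Hj Hij) as [c [Hci Hcj]].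
  destruct (H2 i l Hi Hlk (not_eq_sym Hli)) as [x [Hxi Hxl]].
  destruct (H2 j l Hj Hlk (not_eq_sym Hlj)) as [y [Hyj Hyl]].
  destruct (Hcv i Hi) as [cvi [cli _]].
  destruct (Hcv j Hj) as [cvj [clj _]].
  destruct (Hcv l Hlk) as [cvl _].
  destruct (core (G i) (G j) (G l) c x y) as [w [Hwi [Hwj Hwb]]]; auto.
  { intros p Hp. apply (H3 i j l Hi Hj Hlk Hij (not_eq_sym Hlj) (not_eq_sym Hli)).
    exists p; exact Hp. }
  assert (Hav : forall n, (n <= k)%nat -> exists r, 0 < r /\
     forall l', (l' < n)%nat -> l' <> i -> l' <> j -> forall q, in_ball w r q -> ~ G l' q).
  { induction n as [|n IH]; intros Hn.
    - exists 1; split; [lra|]. intros; lia.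
    - destruct (IH ltac:(lia)) as [r [Hr Hrr]].
      destruct (Nat.eq_dec n i) as [Hni|Hni]; [|destruct (Nat.eq_dec n j) as [Hnj|Hnj]].
      + exists r; split; auto. intros l' Hl' ? ? q Hq. apply (Hrr l'); auto. lia.
      + exists r; split; auto. intros l' Hl' ? ? q Hq. apply (Hrr l'); auto. lia.
      + assert (Hnw : ~ G n w).
        { intro Hgn. apply (H3 i j n Hi Hj ltac:(lia) Hij (not_eq_sym Hnj) (not_eq_sym Hni)).
          exists w; auto. }
        destruct (Hcv n ltac:(lia)) as [_ [cln _]].
        destruct (cln w Hnw) as [e [He Hee]].
        exists (Rmin r e). split; [apply Rmin_glb_lt; auto|].
        intros l' Hl' Hl'i Hl'j q Hq.
        assert (0 < Rmin r e) by (apply Rmin_glb_lt; auto).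
        destruct (Nat.eq_dec l' n) as [->|Hl'n].
        * apply Hee. apply (in_ball_mono _ _ (Rmin r e)); auto. apply Rmin_r.
        * apply (Hrr l'); auto; [lia|]. apply (in_ball_mono _ _ (Rmin r e)); auto. apply Rmin_l. }
  destruct (Hav k (le_n k)) as [r [Hr Hrr]].
  assert (Hout : forall e, 0 < e -> exists q, in_ball w e q /\ ~ family_union k G q).
  { intros e He.
    assert (Hm : 0 < Rmin e r) by (apply Rmin_glb_lt; auto).
    destruct (Hwb _ Hm) as [q [Hq [Hqi Hqj]]].
    exists q. split. { apply (in_ball_mono _ _ (Rmin e r)); auto. apply Rmin_l. }
    intros [l' [Hl' Hg]].
    destruct (Nat.eq_dec l' i) as [->|]; [tauto|].
    destruct (Nat.eq_dec l' j) as [->|]; [tauto|].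
    apply (Hrr l' Hl' ltac:(assumption) ltac:(assumption) q); auto. apply (in_ball_mono _ _ (Rmin e r)); auto. apply Rmin_r. }
  exists w. split; auto. split; auto. split.
  - exists i, j. split; auto. split; auto. split; auto. split.
    + intros e He. split; [exists w; split; auto; apply in_ball_self; auto|].
      destruct (Hout e He) as [q [Hq Hnq]]. exists q; split; auto.
      intro; apply Hnq; exists i; auto.
    + intros e He. split; [exists w; split; auto; apply in_ball_self; auto|].
      destruct (Hout e He) as [q [Hq Hnq]]. exists q; split; auto.
      intro; apply Hnq; exists j; auto.
  - intros e He. split.
    + exists w; split; [apply in_ball_self; auto|]. exists i; auto.
    + apply Hout; auto.
Qed.

Theorem lemma3p3 (k : nat) (G : nat -> region) :
  (3 <= k)%nat ->
  (forall i, (i < k)%nat -> convex_set (G i) /\ compact_set (G i)) ->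
  exactly_2_intersecting k G ->
  union_complexity_ge k G (binom2 k).
Proof.
  intros Hk Hcv H2i.
  set (Pp := fun i j p => G i p /\ G j p /\ union_vertex k G p).
  set (pt := fun ij : nat * nat => epsilon (inhabits ((0,0) : point)) (Pp (fst ij) (snd ij))).
  assert (Hpt : forall ij, In ij (pairs k) -> Pp (fst ij) (snd ij) (pt ij)).
  { intros [i j] Hin. apply pairs_in in Hin. unfold pt. apply epsilon_spec.
    simpl; apply (pair_lemma k G Hk Hcv H2i); lia. }
  exists (map pt (pairs k)). split; [rewrite length_map; apply pairs_len|]. split.
  - apply NoDup_map_NoDup_ForallPairs; [|apply pairs_nodup].
    intros [i j] [i' j'] H1 H2 Heq.
    pose proof (Hpt _ H1) as [Hi [Hj _]]. pose proof (Hpt _ H2) as [Hi' [Hj' _]].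
    simpl in *. rewrite Heq in Hi, Hj.
    apply pairs_in in H1. apply pairs_in in H2.
    destruct H2i as [_ H3].
    destruct (Nat.eq_dec i i') as [Hii|Hii]; destruct (Nat.eq_dec j j') as [Hjj|Hjj];
      [subst; auto| exfalso..].
    + apply (H3 i j j'); [lia..|]; exists (pt (i', j')); repeat split; assumption.
    + apply (H3 i j i'); [lia..|]; exists (pt (i', j')); repeat split; assumption.
    + destruct (Nat.eq_dec j i').
      * apply (H3 i i' j'); [lia..|]; exists (pt (i', j')); repeat split; assumption.
      * apply (H3 i j i'); [lia..|]; exists (pt (i', j')); repeat split; assumption.
  - intros p Hp. apply in_map_iff in Hp. destruct Hp as [ij [<- Hin]].
    apply Hpt; auto.
Qed.
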